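(* Let $d\ge1$. For all $p,q\in\mathcal P_d$, if $\mathcal A(p)=\mathcal A(q)$ then $q=cp$ for some $c\in\mathbb C$ with $|c|=1$; that is, $\mathcal A(p)$ determines the equivalence class $[p]=\{cp:|c|=1\}$.
   Context: $\mathcal P_d$ is the space of complex polynomials of degree at most $d-1$ on the unit circle. Let $\omega=e^{2\pi i/(2d-1)}$, $\nu=e^{2\pi i/d}$. The map $\mathcal A:\mathcal P_d\to\mathbb R^{6d-3}$ is $(\mathcal A(p))_j=|p(\omega^j)|^2$ for $1\le j\le 2d-1$, $|p(\omega^j)-p(\omega^j\nu)|^2$ for $2d\le j\le4d-2$, and $|p(\omega^j)-ip(\omega^j\nu)|^2$ for $4d-1\le j\le 6d-3$. *)

(* Defs.v *)
From HB Require Import structures.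
From mathcomp Require Import all_boot all_order all_algebra.
From mathcomp Require Import reals trigo.
From mathcomp Require Export complex.
Set Implicit Arguments. Unset Strict Implicit. Unset Printing Implicit Defensive.
Import Order.TTheory GRing.Theory Num.Theory.
Local Open Scope ring_scope.
Local Open Scope complex_scope.

Definition expi (R : realType) (t : R) : R[i] := (cos t +i* sin t)%C.

Definition omega (R : realType) (d : nat) : R[i] :=
  expi ((2 * pi) / (2 * d - 1)%:R).

Definition nu (R : realType) (d : nat) : R[i] :=
  expi ((2 * pi) / d%:R).

Definition Pd (R : realType) (d : nat) (p : {poly R[i]}) : Prop :=
  (size p <= d)%N.

(* The measurement map A : P_d -> R^{6d-3}; component j (1 <= j <= 6d-3).
   Values are the squared moduli |.|^2 (real numbers, viewed inside C). *)
Definition Ameas (R : realType) (d : nat) (p : {poly R[i]}) (j : nat) : R[i] :=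
  let w := omega R d ^+ j in
  let v := nu R d in
  if (j <= 2 * d - 1)%N then `|p.[w]| ^+ 2
  else if (j <= 4 * d - 2)%N then `|(p.[w] - p.[w * v])| ^+ 2
  else `|(p.[w] - 'i * p.[w * v])| ^+ 2.

(* Main.v *)
Require Import Defs.
From HB Require Import structures.
From mathcomp Require Import all_boot all_order all_algebra.
From mathcomp Require Import reals trigo complex.
From mathcomp Require Import ring lra zify.
Import Order.TTheory GRing.Theory Num.Theory.
Local Open Scope ring_scope.

Set Implicit Arguments. Unset Strict Implicit.
Section Alg.
Variable R : realType.
Local Notation C := R[i].
Local Notation cj x := (conjc x).

Lemma mulcj_eq0 (x : C) : x * cj x = 0 -> x = 0.
Proof. by rewrite -sqr_normc => /eqP; rewrite expf_eq0 /= normr_eq0 => /eqP. Qed.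

Lemma key_pt (a b a' b' : C) : a * cj a = a' * cj a' -> b * cj b = b' * cj b' ->
  a * cj b = a' * cj b' -> a' * b = b' * a.
Proof.
move=> E1 E2 E3.
have E3' : b' * cj a' = cj a * b.
  have := congr1 (@conjc R) E3; rewrite !rmorphM /= !conjcK => h; by rewrite mulrC h.
apply/eqP; rewrite -subr_eq0; apply/eqP/mulcj_eq0.
rewrite rmorphB !rmorphM /=.
have -> : (a' * b - b' * a) * (cj a' * cj b - cj b' * cj a) =
  (a' * cj a') * (b * cj b) - (a' * cj b') * (b * cj a) - (b' * cj a') * (a * cj b)
  + (b' * cj b') * (a * cj a) by ring.
rewrite -E1 -E2 -E3 E3'; ring.
Qed.

Lemma polar (a b a' b' ii : C) : cj ii = - ii -> ii != 0 ->
  a * cj a = a' * cj a' -> b * cj b = b' * cj b' ->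
  (a - b) * cj (a - b) = (a' - b') * cj (a' - b') ->
  (a - ii * b) * cj (a - ii * b) = (a' - ii * b') * cj (a' - ii * b') ->
  a * cj b = a' * cj b'.
Proof.
move=> Ei i0 E1 E2 E3 E4.
have F : forall x y : C, 2%:R * ii * (x * cj y) =
   ii * (x * cj x + y * cj y - (x - y) * cj (x - y))
   + ((x - ii * y) * cj (x - ii * y) - x * cj x + ii ^+ 2 * (y * cj y)).
  by move=> x y; rewrite !rmorphB !rmorphM /= Ei; ring.
apply: (mulfI (x := 2%:R * ii)); first by rewrite mulf_neq0 // pnatr_eq0.
by rewrite !F E1 E2 E3 E4.
Qed.

Lemma pow_inj (x : C) N : x != 0 -> (forall n, (0 < n < N)%N -> x ^+ n != 1) ->
  forall i j, (i < N)%N -> (j < N)%N -> x ^+ i = x ^+ j -> i = j.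
Proof.
move=> x0 hN.
have H : forall i j, (i < j)%N -> (j < N)%N -> x ^+ i = x ^+ j -> False.
  move=> i j ij jN E; have := hN (j - i)%N; rewrite expfB // E divff ?expf_neq0 // eqxx => h.
  have : (0 < j - i < N)%N by lia.
  by move/h.
move=> i j iN jN E; case: (ltngtP i j) => // h.
  by case: (H _ _ h jN E).
by case: (H _ _ h iN (esym E)).
Qed.


Lemma poly_eq0_pts (P : {poly C}) n (z : nat -> C) : (size P <= n)%N ->
  (forall i j, (i < n)%N -> (j < n)%N -> z i = z j -> i = j) ->
  (forall i, (i < n)%N -> P.[z i] = 0) -> P = 0.
Proof.
move=> sP zi Pz; apply/eqP; apply: contraT => P0.
have := max_poly_roots (rs := [seq z i | i <- iota 0 n]) P0.
rewrite size_map size_iota => h.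
have : (n < size P)%N.
  apply: h.
    apply/allP => x xin; have [k] := mapP xin; rewrite mem_iota => /andP[_ ilt] ->.
    by apply/rootP; apply: Pz; lia.
  rewrite map_inj_in_uniq ?iota_uniq // => i j; rewrite !mem_iota => /andP[_ ?] /andP[_ ?].
  by apply: zi; lia.
lia.
Qed.

Definition sh d (p : {poly C}) := \poly_(k < d) cj (p`_(d.-1 - k)).

Lemma sh_eval d (p : {poly C}) (z : C) : (size p <= d)%N -> z * cj z = 1 ->
  (sh d p).[z] = z ^+ d.-1 * cj p.[z].
Proof.
move=> sp zz; rewrite horner_poly (horner_coef_wide _ sp) rmorph_sum mulr_sumr.
rewrite (reindex_inj rev_ord_inj) /=; apply: eq_bigr => i _.
have := ltn_ord i => ilt.
rewrite rmorphM rmorphXn /=.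
have -> : (d - i.+1 = d.-1 - i)%N by lia.
have -> : (d.-1 - (d.-1 - i) = i)%N by lia.
have -> : z ^+ d.-1 = z ^+ (d.-1 - i) * z ^+ i by rewrite -exprD; congr (_ ^+ _); lia.
have h : z ^+ i * cj z ^+ i = 1 by rewrite -exprMn zz expr1n.
rewrite -[LHS]mulr1 -h; ring.
Qed.

Definition Tv (v : C) (p : {poly C}) := \poly_(k < size p) (p`_k * v ^+ k).

Lemma coef_Tv (v : C) (p : {poly C}) k : (Tv v p)`_k = p`_k * v ^+ k.
Proof. by rewrite coef_poly; case: ltnP => // h; rewrite nth_default // mul0r. Qed.

Lemma Tv_eval (v : C) (p : {poly C}) z : (Tv v p).[z] = p.[v * z].
Proof. by rewrite horner_poly horner_coef; apply: eq_bigr => i _; rewrite exprMn mulrA. Qed.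

Lemma size_Tv (v : C) (p : {poly C}) : v != 0 -> size (Tv v p) = size p.
Proof.
move=> v0; have [->|p0] := eqVneq p 0.
  by rewrite /Tv size_poly0 poly_def big_ord0 size_poly0.
apply: size_poly_eq; rewrite mulf_neq0 ?expf_neq0 //.
by rewrite -lead_coefE lead_coef_eq0.
Qed.

Lemma lead_Tv (v : C) (p : {poly C}) : v != 0 -> lead_coef (Tv v p) = lead_coef p * v ^+ (size p).-1.
Proof. by move=> v0; rewrite !lead_coefE size_Tv // coef_Tv. Qed.

Lemma Tv_lin (v : C) (q p : {poly C}) c : Tv v (q - c *: p) = Tv v q - c *: Tv v p.
Proof. by apply/polyP => k; rewrite coefB coefZ !coef_Tv coefB coefZ; ring. Qed.

Lemma Tv_size_eq (v : C) d (f p : {poly C}) : v != 0 -> (forall n, (0 < n < d)%N -> v ^+ n != 1) ->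
  (size f <= d)%N -> (size p <= d)%N -> f != 0 -> p != 0 ->
  f * Tv v p = Tv v f * p -> size f = size p.
Proof.
move=> v0 hN sf sp f0 p0 E.
have := congr1 lead_coef E; rewrite !lead_coefM !lead_Tv // => h.
have h2 : v ^+ (size p).-1 = v ^+ (size f).-1.
  apply: (mulfI (x := lead_coef f * lead_coef p)).
    by rewrite mulf_neq0 // lead_coef_eq0.
  by rewrite -mulrA h mulrAC.
have fp : (0 < size f)%N by rewrite size_poly_gt0.
have pp : (0 < size p)%N by rewrite size_poly_gt0.
have := @pow_inj v d v0 hN ((size p).-1) ((size f).-1).
move=> /(_ ltac:(lia) ltac:(lia) h2); lia.
Qed.

End Alg.
Unset Implicit Arguments.
Section Trig.
Variable R : realType.

Lemma expiD (t s : R) : expi (t + s) = expi t * expi s.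
Proof. rewrite /expi cosD sinD; simpc. by congr (_ +i* _)%C; ring. Qed.

Lemma expi0 : expi (0 : R) = 1.
Proof. by rewrite /expi cos0 sin0. Qed.

Lemma expiX (t : R) n : expi t ^+ n = expi (t *+ n).
Proof.
elim: n => [|n IH]; first by rewrite expr0 mulr0n expi0.
by rewrite exprS IH mulrS expiD.
Qed.

Lemma expi_conj (t : R) : expi t * conjc (expi t) = 1.
Proof.
rewrite /expi; simpc. rewrite -!expr2 cos2Dsin2.
by congr (_ +i* _)%C; ring.
Qed.

Lemma expi_ne1 (t : R) : 0 < t < pi *+ 2 -> expi t != 1.
Proof.
move=> /andP[t0 t2]; apply/negP => /eqP; rewrite /expi => -[hc hs].
have pi0 := pi_gt0 R.
case: (ltgtP t pi) => h.
- by have := sin_gt0_pi (x := t); rewrite hs ltxx t0 h => /(_ isT).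
- have : 0 < sin (t - pi) by apply: sin_gt0_pi; apply/andP; split; lra.
  by rewrite sinB cospi sinpi hs; lra.
- by move: hc; rewrite h cospi; lra.
Qed.

Lemma rootu (N : nat) : (0 < N)%N ->
  expi ((2 * pi) / N%:R) ^+ N = (1 : R[i]) /\
  (forall n, (0 < n < N)%N -> expi ((2 * pi) / N%:R) ^+ n != (1 : R[i])).
Proof.
move=> N0; have pi0 := pi_gt0 R.
have NR : (N%:R : R) != 0 by rewrite pnatr_eq0; lia.
set x := (2 * pi) / N%:R.
have x0 : 0 < x by rewrite /x divr_gt0 // ?ltr0n //; lra.
have xN : x *+ N = pi *+ 2 by rewrite -mulr_natr /x divfK // mulr_natl.
split; first by rewrite expiX xN /expi cos2pi sin2pi.
move=> n /andP[n0 nN]; rewrite expiX; apply: expi_ne1.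
by rewrite pmulrn_lgt0 //= -xN ltr_pMn2l // x0.
Qed.

Lemma cj_pow (z : R[i]) n : z * conjc z = 1 -> z ^+ n * conjc (z ^+ n) = 1.
Proof. by move=> h; rewrite rmorphXn /= -exprMn h expr1n. Qed.

End Trig.

Theorem mainTheorem6 (R : realType) (d : nat) (p q : {poly R[i]}) :
  (1 <= d)%N -> Pd d p -> Pd d q ->
  (forall j : nat, (1 <= j <= 6 * d - 3)%N -> Ameas d p j = Ameas d q j) ->
  exists c : R[i], `|c| = 1 /\ q = c *: p.
Proof.
move=> d1 sp sq hA; rewrite /Pd in sp sq.
set N := (2 * d - 1)%N.
have N0 : (0 < N)%N by rewrite /N; lia.
have [hw1 hwN] := rootu R N N0.
have ew : omega R d = expi ((2 * pi) / N%:R) by [].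
set w := expi ((2 * pi) / N%:R) in hw1 hwN ew.
have ww : w * conjc w = 1 := expi_conj _ _.
have w0 : w != 0.
  by apply/eqP => h; move: ww; rewrite h mul0r => /eqP; rewrite eq_sym oner_eq0.
have [_ hvN] := rootu R d d1.
have ev : nu R d = expi ((2 * pi) / d%:R) by [].
set v := expi ((2 * pi) / d%:R) in hvN ev.
have vv : v * conjc v = 1 := expi_conj _ _.
have v0 : v != 0.
  by apply/eqP => h; move: vv; rewrite h mul0r => /eqP; rewrite eq_sym oner_eq0.
pose z i := w ^+ i.+1.
have zc i : z i * conjc (z i) = 1 by apply: cj_pow.
have zinj : forall i j, (i < N)%N -> (j < N)%N -> z i = z j -> i = j.
  move=> i j iN jN; rewrite /z !exprSr => /(mulIf w0).
  exact: (@pow_inj R w N w0 hwN i j iN jN).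
have M1 i : (i < N)%N -> p.[z i] * conjc p.[z i] = q.[z i] * conjc q.[z i].
  move=> iN; have := hA i.+1 ltac:(rewrite /N in iN; lia).
  have c1 : (i.+1 <= 2 * d - 1)%N by rewrite /N in iN; lia.
  by rewrite /Ameas c1 /= !sqr_normc ew.
have M2 i : (i < N)%N -> (p.[z i] - p.[v * z i]) * conjc (p.[z i] - p.[v * z i])
     = (q.[z i] - q.[v * z i]) * conjc (q.[z i] - q.[v * z i]).
  move=> iN; have := hA (i.+1 + N)%N ltac:(rewrite /N in iN *; lia).
  have c1 : (i.+1 + N <= 2 * d - 1)%N = false by rewrite /N in iN *; lia.
  have c2 : (i.+1 + N <= 4 * d - 2)%N by rewrite /N in iN *; lia.
  by rewrite /Ameas c1 c2 /= !sqr_normc ew exprD hw1 mulr1 ev [v * _]mulrC.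
have M3 i : (i < N)%N ->
     (p.[z i] - 'i%C * p.[v * z i]) * conjc (p.[z i] - 'i%C * p.[v * z i])
     = (q.[z i] - 'i%C * q.[v * z i]) * conjc (q.[z i] - 'i%C * q.[v * z i]).
  move=> iN; have := hA (i.+1 + N + N)%N ltac:(rewrite /N in iN *; lia).
  have c1 : (i.+1 + N + N <= 2 * d - 1)%N = false by rewrite /N in iN *; lia.
  have c2 : (i.+1 + N + N <= 4 * d - 2)%N = false by rewrite /N in iN *; lia.
  by rewrite /Ameas c1 c2 /= !sqr_normc ew !exprD hw1 !mulr1 ev [v * _]mulrC.
have shs (f : {poly R[i]}) : (size (sh d f) <= d)%N := size_poly _ _.
pose Pp := p * sh d p - q * sh d q.
have PP0 : Pp = 0.
  apply: (@poly_eq0_pts R Pp N z) => //.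
    rewrite /Pp; apply: leq_trans (size_add _ _) _; rewrite size_opp geq_max.
    have := shs p; have := shs q; have := size_mul_leq p (sh d p);
      have := size_mul_leq q (sh d q); rewrite /N -!subn1 => h1 h2 h3 h4.
    apply/andP; split; [apply: leq_trans h2 _ | apply: leq_trans h1 _].
    by apply: leq_trans (leq_sub2r 1 (leq_add sp h4)) _; lia.
    by apply: leq_trans (leq_sub2r 1 (leq_add sq h3)) _; lia.
  move=> i iN; rewrite /Pp hornerD hornerN !hornerM !sh_eval //.
  have h := M1 i iN.
  transitivity (z i ^+ d.-1 * (p.[z i] * conjc p.[z i] - q.[z i] * conjc q.[z i])).
    by ring.
  by rewrite h subrr mulr0.
have circ y : y * conjc y = 1 -> p.[y] * conjc p.[y] = q.[y] * conjc q.[y].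
  move=> hy; have := congr1 (fun P => P.[y]) PP0.
  rewrite /Pp /= hornerD hornerN !hornerM !sh_eval // horner0 => h.
  have y0 : y ^+ d.-1 != 0.
    rewrite expf_neq0 //; apply/eqP => h0; move: hy; rewrite h0 mul0r => /eqP.
    by rewrite eq_sym oner_eq0.
  apply: (mulfI y0); apply/eqP; rewrite -subr_eq0 -h; apply/eqP; ring.
have Ei : conjc ('i%C : R[i]) = - 'i%C.
  by apply/eqP; rewrite eq_complex /= oppr0 !eqxx.
have i0 : ('i%C : R[i]) != 0 by rewrite eq_complex /= oner_eq0 andbF.
pose H := q * Tv v p - Tv v q * p.
have HH0 : H = 0.
  apply: (@poly_eq0_pts R H N z) => //.
    rewrite /H; apply: leq_trans (size_add _ _) _; rewrite size_opp geq_max.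
    have := size_mul_leq q (Tv v p); have := size_mul_leq (Tv v q) p.
    rewrite !size_Tv // -!subn1 => h1 h2; apply/andP; split; [apply: leq_trans h2 _ | apply: leq_trans h1 _].
    by apply: leq_trans (leq_sub2r 1 (leq_add sq sp)) _; rewrite /N; lia.
    by apply: leq_trans (leq_sub2r 1 (leq_add sq sp)) _; rewrite /N; lia.
  move=> i iN; rewrite /H hornerD hornerN !hornerM !Tv_eval.
  apply/eqP; rewrite subr_eq0; apply/eqP.
  apply: key_pt; first exact: M1.
    by apply: circ; rewrite rmorphM /= mulrACA vv zc mulr1.
  by apply: (polar Ei i0 (M1 i iN)) => //;
    [apply: circ; rewrite rmorphM /= mulrACA vv zc mulr1 | exact: M2 | exact: M3].
have HH : q * Tv v p = Tv v q * p by apply/eqP; rewrite -subr_eq0 -/H HH0.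
have zero (f : {poly R[i]}) : (size f <= d)%N ->
    (forall i, (i < N)%N -> f.[z i] * conjc f.[z i] = 0) -> f = 0.
  move=> sf hf; apply: (@poly_eq0_pts R f N z) => //; first by rewrite /N; lia.
  by move=> i iN; apply: mulcj_eq0; apply: hf.
have [p0|p0] := eqVneq p 0.
  exists 1; rewrite normr1 scale1r p0; split => //.
  by apply: zero => // i iN; rewrite -M1 // p0 horner0 mul0r.
have [q0|q0] := eqVneq q 0.
  by move/eqP: p0; case; apply: zero => // i iN; rewrite M1 // q0 horner0 mul0r.
have Hsz := Tv_size_eq v0 hvN sq sp q0 p0 HH.
set c := lead_coef q / lead_coef p.
have gT : (q - c *: p) * Tv v p = Tv v (q - c *: p) * p.
  rewrite Tv_lin -!mul_polyC.
  transitivity (q * Tv v p - c%:P * (p * Tv v p)); first by ring.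
  by rewrite HH; ring.
have g0 : q - c *: p = 0.
  apply/eqP; apply: contraT => g0.
  have sg : (size (q - c *: p)%R <= d)%N.
    apply: leq_trans (size_add _ _) _; rewrite size_opp geq_max sq /=.
    exact: leq_trans (size_scale_leq _ _) sp.
  have := Tv_size_eq v0 hvN sg sp g0 p0 gT => e.
  move: g0; rewrite -lead_coef_eq0 lead_coefE e coefB coefZ.
  rewrite -Hsz -lead_coefE Hsz -lead_coefE /c divfK ?subrr ?eqxx //.
  by rewrite lead_coef_eq0.
have qE : q = c *: p by apply: subr0_eq.
exists c; split => //.
have cc : c * conjc c = 1.
  apply/eqP; apply: contraT => hc.
  move/eqP: p0; case; apply: zero => // i iN.
  have := M1 i iN; rewrite qE hornerZ rmorphM /= => h.
  apply/eqP; move: hc; apply: contraR => hx.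
  apply/eqP; apply: (mulIf hx); rewrite mul1r [RHS]h; ring.
by have := sqrp_eq1 (normr_ge0 c); rewrite sqr_normc cc eqxx => /esym/eqP.
Qed.
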